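(* Let $(X,d,\kappa)$ be a complete digital metric space where $d$ is an $\ell_p$ metric for some $1\le p\le\infty$, and let $S,T:X\to X$ be commuting maps ($S\circ T=T\circ S$) with $S(X)\subset T(X)$. If there exist $\alpha\in(0,1)$ and a positive integer $k$ such that $d(S^k(x),S^k(y))\le\alpha\, d(T(x),T(y))$ for all $x,y\in X$, then $S$ and $T$ have a common fixed point.
   Context: A digital metric space is a triple $(X,d,\kappa)$ where $X\subset\mathbb{Z}^n$ for some positive integer $n$, $\kappa$ is an adjacency relation on $X$, and $d$ is a metric on $X$. The $\ell_p$ metric on $\mathbb{Z}^n$ is $d(x,y)=(\sum_i|x_i-y_i|^p)^{1/p}$ for $1\le p<\infty$ and $\max_i|x_i-y_i|$ for $p=\infty$. $S^k$ denotes the $k$-fold composition of $S$. *)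

(* Defs.v *)
From HB Require Import structures.
From mathcomp Require Import all_boot all_order all_algebra.
From mathcomp Require Import all_classical all_reals all_analysis.
Set Implicit Arguments. Unset Strict Implicit. Unset Printing Implicit Defensive.
Import Order.TTheory GRing.Theory Num.Theory.
Local Open Scope ring_scope.
Local Open Scope classical_set_scope.

Inductive lp_exp (R : realType) := LpFin of R | LpInf.
Arguments LpInf {R}.

Definition lp_exp_ok (R : realType) (p : lp_exp R) : Prop :=
  match p with LpFin q => 1 <= q | LpInf => True end.

Definition lp_dist (R : realType) (n : nat) (p : lp_exp R)
    (x y : 'rV[int]_n) : R :=
  match p with
  | LpFin q => powR (\sum_(i < n) powR (`|x ord0 i - y ord0 i|%:~R) q) q^-1
  | LpInf => \big[Num.max/0]_(i < n) (`|x ord0 i - y ord0 i|%:~R)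
  end.

Definition d_cauchy (T : Type) (R : realType) (d : T -> T -> R)
    (u : nat -> T) : Prop :=
  forall e : R, 0 < e -> exists N : nat,
    forall m k : nat, (N <= m)%N -> (N <= k)%N -> d (u m) (u k) < e.

Definition d_converges (T : Type) (R : realType) (d : T -> T -> R)
    (u : nat -> T) (l : T) : Prop :=
  forall e : R, 0 < e -> exists N : nat, forall m : nat, (N <= m)%N -> d (u m) l < e.

Definition d_complete (T : Type) (R : realType) (X : set T) (d : T -> T -> R) : Prop :=
  forall u : nat -> T, (forall m, X (u m)) -> d_cauchy d u ->
    exists2 l, X l & d_converges d u l.

(* Main.v *)
Require Import Defs.
From HB Require Import structures.
From mathcomp Require Import all_boot all_order all_algebra.
From mathcomp Require Import all_classical all_reals all_analysis.
From mathcomp Require Import lra.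
Import Order.TTheory GRing.Theory Num.Theory.
Local Open Scope ring_scope.
Local Open Scope classical_set_scope.
Lemma geo_small {R : realType} {a : R} (D : R) : 0 < a -> a < 1 -> exists n : nat, a ^+ n * D < 1.
Proof.
move=> a0 a1.
have h := cvg_expr (R:=R) (z:=a).
have : `|a| < 1 by rewrite ger0_norm // ltW.
move/h => /cvgr0_norm_lt /(_ (1 / (`|D| + 1))).
case.
  by rewrite divr_gt0 // ltr_pwDr.
move=> N _ HN; exists N.
have := HN N (leqnn N).
have t0 : 0 <= a ^+ N by rewrite exprn_ge0 // ltW.
rewrite ger0_norm // ltr_pdivlMr; last by rewrite ltr_pwDr.
have hD : D <= `|D| by rewrite ler_norm.
have hD0 : 0 <= `|D| by [].
move: t0 hD hD0; set t := a ^+ N; set u := `|D|.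
move=> *; nra.
Qed.
Lemma lp_ge0 (R : realType) (n : nat) (p : lp_exp R) (x y : 'rV[int]_n) : 0 <= lp_dist p x y.
Proof.
case: p => [q|] /=; first exact: powR_ge0.
by elim/big_ind: _ => // a b ha hb; rewrite le_max ha.
Qed.

Lemma lp_small (R : realType) (n : nat) (p : lp_exp R) (x y : 'rV[int]_n) :
  lp_exp_ok p -> lp_dist p x y < 1 -> x = y.
Proof.
move=> hp hd; apply/rowP => i; apply/eqP; apply/negPn/negP => hne.
have h1 : (1 : R) <= (`|x ord0 i - y ord0 i|%:~R).
  by rewrite ler1z -gtz0_ge1 normr_gt0 subr_eq0.
move: hd; apply/negP; rewrite -leNgt.
case: p hp => [q|] /= hq.
  have q0 : 0 <= q by apply: le_trans hq.
  have e1 : forall a : R, 1 <= a -> forall r, 0 <= r -> 1 <= a `^ r.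
    move=> a ha r hr; have -> : (1:R) = 1 `^ r by rewrite powR1.
    by apply: ge0_ler_powR => //; rewrite nnegrE // (le_trans _ ha).
  apply: (e1); last by rewrite invr_ge0.
  rewrite (bigD1 i) //=; apply: le_trans (e1 _ h1 _ q0) _.
  by rewrite lerDl sumr_ge0 // => j _; exact: powR_ge0.
rewrite (bigD1 i) //=; apply: le_trans h1 _; by rewrite le_max lexx.
Qed.
Arguments lp_small {R n p x y}.
Arguments lp_ge0 {R n}.

Theorem corollary5p4 (R : realType) (n : nat) (X : set 'rV[int]_n)
  (kappa : 'rV[int]_n -> 'rV[int]_n -> Prop) (p : lp_exp R)
  (S T : 'rV[int]_n -> 'rV[int]_n) (alpha : R) (k : nat) :
  X !=set0 ->
  lp_exp_ok p ->
  d_complete X (lp_dist p) ->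
  (forall x, X x -> X (S x)) ->
  (forall x, X x -> X (T x)) ->
  (forall x, X x -> S (T x) = T (S x)) ->
  S @` X `<=` T @` X ->
  0 < alpha -> alpha < 1 -> (0 < k)%N ->
  (forall x y, X x -> X y ->
     lp_dist p (iter k S x) (iter k S y) <= alpha * lp_dist p (T x) (T y)) ->
  exists2 x, X x & S x = x /\ T x = x.
Proof.
move=> [x0 Xx0] hp _ XS XT ST sub a0 a1 k0 hc.
have XSk : forall m x, X x -> X (iter m S x).
  by move=> m x Xx; elim: m => //= m IH; apply: XS.
have TSk : forall m x, X x -> T (iter m S x) = iter m S (T x).
  move=> m x Xx; elim: m => //= m IH.
  by rewrite -IH ST //; exact: XSk.
have uniq0 : forall a b, X a -> X b -> lp_dist p a b <= alpha * lp_dist p a b -> a = b.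
  move=> a b _ _ h; apply: (lp_small hp).
  have := lp_ge0 p a b; move: h; set t := lp_dist p a b => *; nra.
have [g Hg] : {g : 'rV[int]_n -> 'rV[int]_n &
   forall x, X x -> X (g x) /\ T (g x) = iter k S x}.
  apply: (@choice _ _ (fun x y => X x -> X y /\ T y = iter k S x)) => x.
  case: (pselect (X x)) => Xx; last by exists x.
  have : (S @` X) (iter k S x).
    exists (iter k.-1 S x); first exact: XSk.
    by rewrite -iterS prednK.
  by move/sub => [y Xy Ty]; exists y.
pose u m := iter m g x0.
have Xu : forall m, X (u m) by elim => //= m IH; rewrite /u /=; case: (Hg _ IH).
have Tu : forall m, T (u m.+1) = iter k S (u m) by move=> m; case: (Hg _ (Xu m)).
pose D m := lp_dist p (T (u m)) (T (u m.+1)).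
have HD : forall m, D m <= alpha ^+ m * D 0%N.
  elim => [|m IH]; first by rewrite expr0 mul1r.
  rewrite /D !Tu exprS -mulrA; apply: le_trans (hc _ _ (Xu _) (Xu _)) _.
  by rewrite ler_pM2l //; move: IH; rewrite /D !Tu.
have [N HN] := geo_small (D 0%N) a0 a1.
have eq1 : T (u N) = iter k S (u N).
  rewrite -Tu; apply: (lp_small hp); exact: le_lt_trans (HD N) HN.
set w := iter k S (u N).
have Xw : X w by apply: XSk.
have Sw : iter k S w = w.
  have Tw : T w = iter k S w by rewrite /w TSk ?Xu // eq1.
  apply: (uniq0); [exact: XSk | exact: Xw |].
  rewrite {1}/w; apply: le_trans (hc _ _ Xw (Xu N)) _.
  by rewrite Tw eq1.
have Tw : T w = w by rewrite /w TSk ?Xu // eq1 -/w Sw.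
exists w => //.
have XSw : X (S w) by apply: XS.
have TSw : T (S w) = S w by rewrite -ST // Tw.
have SkSw : iter k S (S w) = S w by rewrite -iterSr iterS Sw.
split => //.
apply: (uniq0) => //.
have := hc _ _ XSw Xw; rewrite SkSw Sw TSw Tw.
done.
Qed.
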